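(* Let $u,v:\mathbb{C}\to\mathbb{R}$ be harmonic, $f=u+iv$, $\mathcal{R}_f=f(\mathbb{C})$, and suppose $\mathcal{D}(\mathcal{R}_f)$ contains no pair of antipodal points. Then there exist $\xi\in\partial\mathbb{D}$, $0<\phi<\pi/2$ and $\rho>0$ such that $$\mathcal{R}_f\subset\overline{D}(0,\rho)\cup\big(\mathbb{C}\setminus(\mathcal{C}_{i\xi,\phi}\cup\mathcal{C}^+_{\xi,\phi})\big).$$
   Context: $\partial\mathbb{D}$ is the unit circle; $\overline{D}(0,\rho)$ the closed disc of radius $\rho$ centered at $0$. For a set $\mathcal{R}\subset\mathbb{C}$, $e^{i\theta}\in\partial\mathbb{D}$ is an asymptotic direction of $\mathcal{R}$ if there exist $w_n\in\mathcal{R}$ and $\varepsilon_n>0$, $\varepsilon_n\to0$, with $\varepsilon_n w_n\to e^{i\theta}$; $\mathcal{D}(\mathcal{R})$ is the set of asymptotic directions. For $\xi=e^{i\beta}\in\partial\mathbb{D}$ and $0<\phi<\pi/2$: $\mathcal{C}_{\xi,\phi}=\{te^{i\theta}: t\in\mathbb{R},\ |\theta-\beta|\le\phi\}$ (whole cone) and $\mathcal{C}^+_{\xi,\phi}=\{te^{i\theta}: t\ge0,\ |\theta-\beta|\le\phi\}$ (half cone). *)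

(* Defs.v *)
From Stdlib Require Import Reals Lra.
From Coquelicot Require Import Coquelicot.
Open Scope R_scope.

Definition dx (u : C -> R) : C -> R := fun z => Derive (fun t => u (t, snd z)) (fst z).
Definition dy (u : C -> R) : C -> R := fun z => Derive (fun t => u (fst z, t)) (snd z).


Definition C2_plane (u : C -> R) : Prop :=
  (forall z : C,
     ex_derive (fun t => u (t, snd z)) (fst z) /\
     ex_derive (fun t => u (fst z, t)) (snd z) /\
     ex_derive (fun t => dx u (t, snd z)) (fst z) /\
     ex_derive (fun t => dx u (fst z, t)) (snd z) /\
     ex_derive (fun t => dy u (t, snd z)) (fst z) /\
     ex_derive (fun t => dy u (fst z, t)) (snd z)) /\
  (forall g, List.In g (u :: dx u :: dy u :: dx (dx u) :: dy (dx u) :: dx (dy u) :: dy (dy u) :: nil) ->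
     forall z : C, continuity_2d_pt (fun x y => g (x, y)) (fst z) (snd z)).

Definition harmonic (u : C -> R) : Prop :=
  C2_plane u /\ forall z : C, dx (dx u) z + dy (dy u) z = 0.

Definition cis (th : R) : C := (cos th, sin th).

Definition on_unit_circle (xi : C) : Prop := Cmod xi = 1.

Definition asymptotic_direction (Rs : C -> Prop) (d : C) : Prop :=
  on_unit_circle d /\
  exists (w : nat -> C) (eps : nat -> R),
    (forall n, Rs (w n)) /\ (forall n, 0 < eps n) /\
    is_lim_seq eps 0 /\
    filterlim (fun n => Cmult (RtoC (eps n)) (w n)) eventually (locally d).

Definition whole_cone (xi : C) (phi : R) (z : C) : Prop :=
  exists beta t th : R, xi = cis beta /\ Rabs (th - beta) <= phi /\
    z = Cmult (RtoC t) (cis th).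

Definition half_cone (xi : C) (phi : R) (z : C) : Prop :=
  exists beta t th : R, xi = cis beta /\ 0 <= t /\ Rabs (th - beta) <= phi /\
    z = Cmult (RtoC t) (cis th).

Definition closed_disc0 (rho : R) (z : C) : Prop := Cmod z <= rho.

(* Main.v *)
Require Import Defs.
From Stdlib Require Import Reals Lra Lia Classical ClassicalEpsilon.
From Coquelicot Require Import Coquelicot.
Open Scope R_scope.

Lemma Cmod_le_sum (x : C) : Cmod x <= Rabs (fst x) + Rabs (snd x).
Proof.
  destruct x as [a b]; unfold Cmod; simpl.
  rewrite <- (sqrt_square (Rabs a + Rabs b)).
  2: { pose proof (Rabs_pos a); pose proof (Rabs_pos b); lra. }
  apply sqrt_le_1_alt.
  pose proof (Rabs_pos a); pose proof (Rabs_pos b).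
  assert (Ha: a*a = Rabs a * Rabs a) by (rewrite <- Rabs_mult; rewrite Rabs_pos_eq; nra).
  assert (Hb: b*b = Rabs b * Rabs b) by (rewrite <- Rabs_mult; rewrite Rabs_pos_eq; nra).
  simpl. nra.
Qed.

Lemma sin_abs_le (x : R) : Rabs (sin x) <= Rabs x.
Proof.
  assert (H : forall y, 0 < y -> Rabs (sin y) <= y).
  { intros y Hy. pose proof (sin_lt_x y Hy). pose proof (SIN_bound y).
    destruct (Rle_lt_dec y PI).
    - pose proof (sin_ge_0 y). rewrite Rabs_pos_eq; lra.
    - pose proof PI_RGT_0. pose proof PI2_1. apply Rabs_le; lra. }
  destruct (Rtotal_order x 0) as [h|[h|h]].
  - pose proof (H (-x) ltac:(lra)) as H1. rewrite sin_neg, Rabs_Ropp in H1.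
    rewrite (Rabs_left x) by lra. exact H1.
  - subst; rewrite sin_0, Rabs_R0; lra.
  - rewrite (Rabs_pos_eq x) by lra; apply H; lra.
Qed.

Lemma cis_lip (a b : R) : Cmod (Cminus (cis a) (cis b)) <= 2 * Rabs (a - b).
Proof.
  eapply Rle_trans; [apply Cmod_le_sum|].
  unfold cis, Cminus, Cplus, Copp; simpl.
  replace (cos a + - cos b) with (cos a - cos b) by ring.
  replace (sin a + - sin b) with (sin a - sin b) by ring.
  rewrite form2, form4.
  pose proof (sin_abs_le ((a - b)/2)).
  replace (Rabs ((a - b) / 2)) with (Rabs (a - b) / 2) in H.
  2:{ unfold Rdiv; rewrite Rabs_mult, (Rabs_pos_eq (/2)); lra. }
  pose proof (SIN_bound ((a+b)/2)). pose proof (COS_bound ((a+b)/2)).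
  assert (Rabs (sin ((a + b) / 2)) <= 1) by (apply Rabs_le; lra).
  assert (Rabs (cos ((a + b) / 2)) <= 1) by (apply Rabs_le; lra).
  rewrite !Rabs_mult.
  replace (Rabs (-2)) with 2 by (rewrite Rabs_left; lra).
  rewrite (Rabs_pos_eq 2) by lra.
  pose proof (Rabs_pos (sin ((a - b) / 2))).
  pose proof (Rabs_pos (sin ((a + b) / 2))).
  pose proof (Rabs_pos (cos ((a + b) / 2))).
  nra.
Qed.

Lemma Cmod_cis (t : R) : Cmod (cis t) = 1.
Proof.
  unfold Cmod, cis; simpl. pose proof (sin2_cos2 t) as H. unfold Rsqr in H.
  replace (cos t * (cos t * 1) + sin t * (sin t * 1)) with 1 by lra. apply sqrt_1.
Qed.

Lemma Cmod_opp_diff (x y : C) : Cmod (Cminus (Copp x) (Copp y)) = Cmod (Cminus x y).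
Proof.
  rewrite <- Cmod_opp. f_equal. destruct x, y; unfold Cminus, Copp, Cplus; simpl.
  f_equal; ring.
Qed.

Lemma cis_PI : Copp (cis PI) = cis 0.
Proof. unfold cis, Copp; rewrite cos_PI, sin_PI, cos_0, sin_0; simpl; f_equal; ring. Qed.

Definition nrm (w : C) : C := Cmult (RtoC (/ Cmod w)) w.

Definition Adir (F : C -> Prop) (d : C) : Prop :=
  forall del, 0 < del -> forall rho, exists w, F w /\ rho < Cmod w /\ Cmod (Cminus (nrm w) d) < del.

Lemma A_closed F d : (forall del, 0 < del -> exists d', Adir F d' /\ Cmod (Cminus d' d) < del) -> Adir F d.
Proof.
  intros H del Hdel rho.
  destruct (H (del/2)) as [d' [Hd' Hc]]; [lra|].
  destruct (Hd' (del/2) ltac:(lra) rho) as [w [Fw [Hr Hw]]].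
  exists w; split; [exact Fw|split; [exact Hr|]].
  replace (Cminus (nrm w) d) with (Cplus (Cminus (nrm w) d') (Cminus d' d)).
  2:{ destruct (nrm w), d, d'; unfold Cminus, Cplus, Copp; simpl; f_equal; ring. }
  eapply Rle_lt_trans; [apply Cmod_triangle|]. lra.
Qed.

Lemma small_inv e : 0 < e -> exists N : nat, forall n, (N <= n)%nat -> / (INR n + 1) < e.
Proof.
  intros He. destruct (archimed_cor1 e He) as [N [HN HN0]].
  exists N; intros n Hn.
  apply Rle_lt_trans with (/ INR N); [|exact HN].
  apply Rinv_le_contravar. apply lt_0_INR; lia.
  apply le_INR in Hn; lra.
Qed.

Lemma A_asym F d : Cmod d = 1 -> Adir F d -> asymptotic_direction F d.
Proof.
  intros Hd HA. split; [exact Hd|].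
  assert (H : forall n : nat, exists w, F w /\ INR n + 1 < Cmod w /\
             Cmod (Cminus (nrm w) d) < / (INR n + 1)).
  { intro n; apply HA; apply Rinv_0_lt_compat; pose proof (pos_INR n); lra. }
  pose (w := fun n => proj1_sig (constructive_indefinite_description _ (H n))).
  assert (Hw : forall n, F (w n) /\ INR n + 1 < Cmod (w n) /\
             Cmod (Cminus (nrm (w n)) d) < / (INR n + 1)).
  { intro n; exact (proj2_sig (constructive_indefinite_description _ (H n))). }
  exists w, (fun n => / Cmod (w n)).
  split; [|split; [|split]].
  - intro n; apply Hw.
  - intro n; apply Rinv_0_lt_compat; destruct (Hw n) as [_ [h _]];
      pose proof (pos_INR n); lra.
  - apply is_lim_seq_spec. intros eps.
    destruct (small_inv eps (cond_pos eps)) as [N HN]. exists N. intros n Hn.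
    destruct (Hw n) as [_ [h _]]; pose proof (pos_INR n).
    rewrite Rminus_0_r, Rabs_pos_eq.
    2:{ left; apply Rinv_0_lt_compat; lra. }
    apply Rlt_trans with (/ (INR n + 1)); [|apply HN; lia].
    apply Rinv_lt_contravar; [apply Rmult_lt_0_compat|]; lra.
  - apply filterlim_locally. intros eps.
    destruct (small_inv eps (cond_pos eps)) as [N HN]. exists N. intros n Hn.
    apply C_NormedModule_mixin_compat1.
    change (Cmod (Cminus (nrm (w n)) d) < eps).
    destruct (Hw n) as [_ [_ h]].
    apply Rlt_trans with (/ (INR n + 1)); [exact h|apply HN; lia].
Qed.

Lemma conn (P : C -> Prop)
  (Pcl : forall d, (forall del, 0 < del -> exists d', P d' /\ Cmod (Cminus d' d) < del) -> P d)
  (Pdich : forall th, P (cis th) \/ P (Copp (cis th)))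
  (Pex : forall th, ~ (P (cis th) /\ P (Copp (cis th)))) : ~ P (cis 0).
Proof.
  intro H0. pose proof PI_RGT_0 as HPI.
  pose (E := fun th => 0 <= th <= PI /\ forall t, 0 <= t <= th -> P (cis t)).
  assert (Hb : bound E). { exists PI. intros x [Hx _]. lra. }
  assert (HE0 : E 0).
  { split; [lra|]. intros t Ht. replace t with 0 by lra. exact H0. }
  destruct (completeness E Hb (ex_intro _ 0 HE0)) as [s [Hub Hlub]].
  assert (Hs0 : 0 <= s) by (apply Hub; exact HE0).
  assert (HsPI : s <= PI) by (apply Hlub; intros x [Hx _]; lra).
  assert (F1 : forall t, 0 <= t < s -> P (cis t)).
  { intros t Ht. apply NNPP; intro Hn.
    assert (s <= t); [|lra].
    apply Hlub. intros x [Hx Hx']. apply Rnot_lt_le. intro Hlt.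
    apply Hn, Hx'. lra. }
  assert (Ps : P (cis s)).
  { destruct (Req_dec s 0) as [->|Hne]; [exact H0|].
    apply Pcl. intros del Hdel.
    exists (cis (Rmax 0 (s - del/4))). split.
    - apply F1. split; [apply Rmax_l|]. apply Rmax_lub_lt; lra.
    - eapply Rle_lt_trans; [apply cis_lip|].
      unfold Rmax; destruct (Rle_dec 0 (s - del/4));
        rewrite Rabs_left; lra. }
  assert (HsPI' : s < PI).
  { destruct (Req_dec s PI) as [Heq|]; [|lra].
    exfalso; apply (Pex PI). rewrite cis_PI, <- Heq. split; assumption. }
  destruct (classic (exists del, 0 < del /\ forall t, s < t < s + del -> P (cis t)))
    as [[del [Hdel Hd]]|Hn].
  - pose (t0 := Rmin (s + del/2) PI).
    assert (Ht0 : s < t0) by (apply Rmin_glb_lt; lra).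
    assert (E t0).
    { split. split; [lra|apply Rmin_r].
      intros t Ht. destruct (Rtotal_order t s) as [h|[h|h]].
      - apply F1; lra.
      - subst; exact Ps.
      - apply Hd. split; [lra|]. pose proof (Rmin_l (s + del/2) PI). fold t0 in H. lra. }
    pose proof (Hub t0 H). lra.
  - apply (Pex s). split; [exact Ps|].
    apply Pcl. intros del Hdel.
    apply NNPP; intro Hn2. apply Hn. exists (del/2). split; [lra|].
    intros t Ht. apply NNPP; intro HnP.
    apply Hn2. exists (Copp (cis t)). split.
    + destruct (Pdich t); [contradiction|assumption].
    + rewrite Cmod_opp_diff. eapply Rle_lt_trans; [apply cis_lip|].
      rewrite Rabs_pos_eq; lra.
Qed.

Lemma notA F d : ~ Adir F d -> exists del rho, 0 < del /\
  forall w, F w -> rho < Cmod w -> del <= Cmod (Cminus (nrm w) d).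
Proof.
  intro HA. apply NNPP; intro H. apply HA. intros del Hdel rho.
  apply NNPP; intro H2. apply H. exists del, rho. split; [exact Hdel|].
  intros w Fw Hr. apply Rnot_lt_le. intro Hlt. apply H2. exists w; auto.
Qed.

Lemma nrm_pos t c : 0 < t -> Cmod c = 1 -> nrm (Cmult (RtoC t) c) = c.
Proof.
  intros Ht Hc. unfold nrm. rewrite Cmod_mult, Cmod_R, Hc, Rmult_1_r, Rabs_pos_eq by lra.
  destruct c; unfold Cmult, RtoC; simpl; f_equal; field; lra.
Qed.

Lemma nrm_neg t c : t < 0 -> Cmod c = 1 -> nrm (Cmult (RtoC t) c) = Copp c.
Proof.
  intros Ht Hc. unfold nrm. rewrite Cmod_mult, Cmod_R, Hc, Rmult_1_r, Rabs_left by lra.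
  destruct c; unfold Cmult, RtoC, Copp; simpl; f_equal; field; lra.
Qed.

Lemma final F xi : Cmod xi = 1 -> ~ Adir F xi -> ~ Adir F (Cmult Ci xi) ->
  ~ Adir F (Copp (Cmult Ci xi)) ->
  exists phi rho, 0 < phi < PI / 2 /\ 0 < rho /\ forall w, F w ->
    closed_disc0 rho w \/ ~ (whole_cone (Cmult Ci xi) phi w \/ half_cone xi phi w).
Proof.
  intros Hxi H1 H2 H3.
  destruct (notA _ _ H1) as [d1 [r1 [Hd1 K1]]].
  destruct (notA _ _ H2) as [d2 [r2 [Hd2 K2]]].
  destruct (notA _ _ H3) as [d3 [r3 [Hd3 K3]]].
  pose (del := Rmin d1 (Rmin d2 d3)).
  assert (Hdel : 0 < del) by (apply Rmin_glb_lt; [|apply Rmin_glb_lt]; lra).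
  assert (Hdl : del <= d1 /\ del <= d2 /\ del <= d3).
  { unfold del. pose proof (Rmin_l d1 (Rmin d2 d3)). pose proof (Rmin_r d1 (Rmin d2 d3)).
    pose proof (Rmin_l d2 d3). pose proof (Rmin_r d2 d3). lra. }
  pose (phi := Rmin (del/4) 1).
  assert (Hphi : 0 < phi /\ phi <= del/4).
  { split; [apply Rmin_glb_lt; lra|apply Rmin_l]. }
  pose (rho := Rmax 1 (Rmax r1 (Rmax r2 r3))).
  assert (Hrho : 1 <= rho /\ r1 <= rho /\ r2 <= rho /\ r3 <= rho).
  { unfold rho. pose proof (Rmax_l 1 (Rmax r1 (Rmax r2 r3))).
    pose proof (Rmax_r 1 (Rmax r1 (Rmax r2 r3))).
    pose proof (Rmax_l r1 (Rmax r2 r3)). pose proof (Rmax_r r1 (Rmax r2 r3)).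
    pose proof (Rmax_l r2 r3). pose proof (Rmax_r r2 r3). lra. }
  exists phi, rho. split; [|split].
  { pose proof PI2_1. pose proof (Rmin_r (del/4) 1). fold phi in H0. lra. }
  { lra. }
  intros w Fw. destruct (Rle_lt_dec (Cmod w) rho) as [Hle|Hgt]; [left; exact Hle|right].
  intros [[b [t [th [Hb [Hth Hw]]]]]|[b [t [th [Hb [Ht [Hth Hw]]]]]]].
  - assert (Hmt : Cmod w = Rabs t) by (rewrite Hw, Cmod_mult, Cmod_R, Cmod_cis; ring).
    assert (Hcl : Cmod (Cminus (cis th) (cis b)) < del).
    { eapply Rle_lt_trans; [apply cis_lip|]. lra. }
    destruct (Rtotal_order t 0) as [h|[h|h]].
    + pose proof (K3 w Fw ltac:(lra)).
      rewrite Hw, nrm_neg, Hb, Cmod_opp_diff in H by (auto; apply Cmod_cis). lra.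
    + subst t. rewrite Rabs_R0 in Hmt. lra.
    + pose proof (K2 w Fw ltac:(lra)).
      rewrite Hw, nrm_pos, Hb in H by (auto; apply Cmod_cis). lra.
  - assert (Hmt : Cmod w = Rabs t) by (rewrite Hw, Cmod_mult, Cmod_R, Cmod_cis; ring).
    assert (Hcl : Cmod (Cminus (cis th) (cis b)) < del).
    { eapply Rle_lt_trans; [apply cis_lip|]. lra. }
    destruct (Req_dec t 0) as [h|h].
    + subst t. rewrite Rabs_R0 in Hmt. lra.
    + pose proof (K1 w Fw ltac:(lra)).
      rewrite Hw, nrm_pos, Hb in H by (auto; try lra; apply Cmod_cis). lra.
Qed.

Lemma Copp_inv (x : C) : Copp (Copp x) = x.
Proof. destruct x; unfold Copp; simpl; f_equal; ring. Qed.

Lemma Ci_Ci (x : C) : Cmult Ci (Cmult Ci x) = Copp x.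
Proof. destruct x; unfold Cmult, Ci, Copp; simpl; f_equal; ring. Qed.

Lemma Ci_Ci_opp (x : C) : Cmult Ci (Copp (Cmult Ci x)) = x.
Proof. destruct x; unfold Cmult, Ci, Copp; simpl; f_equal; ring. Qed.

Theorem lemma2 (u v : C -> R) :
  harmonic u -> harmonic v ->
  (* D(R_f) contains no pair of antipodal points, where R_f = f(C), f = u + i v *)
  ~ (exists d : C,
       asymptotic_direction (fun w => exists z : C, w = (u z, v z)) d /\
       asymptotic_direction (fun w => exists z : C, w = (u z, v z)) (Copp d)) ->
  exists (xi : C) (phi rho : R),
    on_unit_circle xi /\ 0 < phi < PI / 2 /\ 0 < rho /\
    forall z : C,
      closed_disc0 rho (u z, v z) \/
      ~ (whole_cone (Cmult Ci xi) phi (u z, v z) \/ half_cone xi phi (u z, v z)).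
Proof.
  intros _ _ Hno.
  pose (F := fun w => exists z : C, w = (u z, v z)).
  change (~ (exists d, asymptotic_direction F d /\ asymptotic_direction F (Copp d))) in Hno.
  assert (Hnot : forall d, Cmod d = 1 -> ~ (Adir F d /\ Adir F (Copp d))).
  { intros d Hd [A1 A2]; apply Hno; exists d; split; apply A_asym; auto.
    rewrite Cmod_opp; auto. }
  assert (Hex : exists th, ~ Adir F (cis th) /\ ~ Adir F (Copp (cis th))).
  { apply NNPP; intro Hn.
    assert (Hd : forall th, Adir F (cis th) \/ Adir F (Copp (cis th))).
    { intro th; apply NNPP; intro H; apply Hn; exists th; split; intro; apply H; auto. }
    assert (Hx : forall th, ~ (Adir F (cis th) /\ Adir F (Copp (cis th)))).
    { intro; apply Hnot, Cmod_cis. }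
    assert (N0 : ~ Adir F (cis 0)) by (apply conn; auto; apply A_closed).
    apply (conn (fun d => Adir F (Copp d))).
    - intros d Hcl. apply A_closed. intros del Hdel.
      destruct (Hcl del Hdel) as [d' [P' Hc]]. exists (Copp d'). split; auto.
      rewrite Cmod_opp_diff; auto.
    - intro th. rewrite Copp_inv. destruct (Hd th); [right|left]; auto.
    - intros th [a b]. rewrite Copp_inv in b. apply (Hx th); auto.
    - destruct (Hd 0); [contradiction|assumption]. }
  destruct Hex as [th [Na Nb]].
  assert (Ha : Cmod (cis th) = 1) by apply Cmod_cis.
  destruct (classic (Adir F (Cmult Ci (cis th)))) as [HA|HA].
  - pose (xi := Copp (Cmult Ci (cis th))).
    assert (Hxi : Cmod xi = 1).
    { unfold xi; rewrite Cmod_opp, Cmod_mult, Cmod_Ci, Ha; ring. }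
    destruct (final F xi Hxi) as [phi [rho [H1 [H2 H3]]]].
    + intro HA'. apply (Hnot (Cmult Ci (cis th))).
      rewrite Cmod_mult, Cmod_Ci, Ha; ring. split; auto.
    + unfold xi; rewrite Ci_Ci_opp; auto.
    + unfold xi; rewrite Ci_Ci_opp; auto.
    + exists xi, phi, rho. split; [exact Hxi|split; [exact H1|split; [exact H2|]]].
      intro z; apply H3; exists z; reflexivity.
  - pose (xi := Cmult Ci (cis th)).
    assert (Hxi : Cmod xi = 1).
    { unfold xi; rewrite Cmod_mult, Cmod_Ci, Ha; ring. }
    destruct (final F xi Hxi) as [phi [rho [H1 [H2 H3]]]].
    + exact HA.
    + unfold xi; rewrite Ci_Ci; auto.
    + unfold xi; rewrite Ci_Ci, Copp_inv; auto.
    + exists xi, phi, rho. split; [exact Hxi|split; [exact H1|split; [exact H2|]]].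
      intro z; apply H3; exists z; reflexivity.
Qed.
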